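(* Let $K$ be a cyclic number field of odd prime degree $\ell$ and prime conductor $f$, and let $\mathcal{N}=\{N(x):x\in\mathcal{O}_K\}\subseteq\mathbb{Z}$. Let $\alpha,\beta$ be nonzero elements of $\mathcal{O}_K$ with $N\beta=f$. Then \[ m_K\!\left(\frac{\alpha}{\beta}\right)\ \ge\ \frac{\min\{|t|: t\in\mathcal{N},\ t\equiv N\alpha\pmod f\}}{f}. \]
   Context: $N=N_{K/\mathbb{Q}}$ is the absolute norm, and for $\xi\in K$, $m_K(\xi)=\inf_{\gamma\in\mathcal{O}_K}|N(\xi-\gamma)|$. *)

(* Defs.v *)
From HB Require Import structures.
From mathcomp Require Import all_boot all_order all_algebra all_fingroup all_solvable all_field.
Set Implicit Arguments. Unset Strict Implicit. Unset Printing Implicit Defensive.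
Import Order.TTheory GRing.Theory Num.Theory.
Local Open Scope ring_scope.

(* A number field Galois over Q is modelled as L : splittingFieldType rat. *)

Definition integral (L : splittingFieldType rat) (x : L) : Prop :=
  exists p : {poly int}, p \is monic /\ root (map_poly (fun z : int => z%:~R) p) x.

(* absolute norm N_{K/Q}(x) as a rational: galNorm 1 fullv x lies in 1%VS = Q*1;
   we take its coordinate on the basis [1]. *)
Definition normK (L : splittingFieldType rat) (x : L) : rat :=
  coord [tuple (1 : L)] ord0 (galNorm 1 fullv x).

Definition in_cyclotomic (L : splittingFieldType rat) (n : nat) : Prop :=
  exists (iota : {rmorphism L -> algC}) (z : algC),
    n.-primitive_root z /\
    forall x : L, exists p : {poly rat}, iota x = (map_poly ratr p).[z].

Definition is_conductor (L : splittingFieldType rat) (f : nat) : Prop :=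
  (0 < f)%N /\ in_cyclotomic L f /\
  forall m : nat, (0 < m)%N -> in_cyclotomic L m -> (f <= m)%N.

Definition in_norm_set (L : splittingFieldType rat) (t : int) : Prop :=
  exists x : L, integral x /\ normK x = t%:~R.

Definition is_min_res (L : splittingFieldType rat) (f : nat) (a : L) (m : int) : Prop :=
  (exists t : int, in_norm_set L t /\ (exists k : int, t%:~R - normK a = (k * f%:Z)%:~R)
                   /\ `|t| = m) /\
  forall t : int, in_norm_set L t -> (exists k : int, t%:~R - normK a = (k * f%:Z)%:~R) ->
                  m <= `|t|.

(* c <= m_K(xi) = inf_{gamma in O_K} |N(xi - gamma)|, i.e. c is a lower bound. *)
Definition mK_ge (L : splittingFieldType rat) (xi : L) (c : rat) : Prop :=
  forall g : L, integral g -> c <= `|normK (xi - g)|.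

(* Main.v *)
Require Import Defs.
From HB Require Import structures.
From mathcomp Require Import all_boot all_order all_algebra all_fingroup all_solvable all_field.
From mathcomp Require Import zify ring.
Set Implicit Arguments. Unset Strict Implicit. Unset Printing Implicit Defensive.
Import Order.TTheory GRing.Theory Num.Theory.
Local Open Scope ring_scope.

Definition dv (e x : algC) : Prop := exists2 w, w \in Aint & x = e * w.

Lemma dv0 e : dv e 0. Proof. by exists 0; rewrite ?mulr0 ?rpred0. Qed.
Lemma dvM e x y : dv e x -> y \in Aint -> dv e (x * y).
Proof. by case=> w wA ->; exists (w * y); rewrite ?mulrA ?rpredM. Qed.
Lemma dvMl e x y : dv e x -> y \in Aint -> dv e (y * x).
Proof. by rewrite mulrC; apply: dvM. Qed.
Lemma dvD e x y : dv e x -> dv e y -> dv e (x + y).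
Proof. by case=> w wA -> [v vA ->]; exists (w + v); rewrite ?mulrDr ?rpredD. Qed.
Lemma dvN e x : dv e x -> dv e (- x).
Proof. by case=> w wA ->; exists (- w); rewrite ?mulrN ?rpredN. Qed.
Lemma dvB e x y : dv e x -> dv e y -> dv e (x - y).
Proof. by move=> ? ?; apply: dvD => //; apply: dvN. Qed.
Lemma dv_trans a b c : dv a b -> dv b c -> dv a c.
Proof. by case=> w wA -> [v vA ->]; exists (w * v); rewrite ?mulrA ?rpredM. Qed.
Lemma dvr e y : y \in Aint -> dv e (e * y).
Proof. by exists y. Qed.
Lemma dv_sum e I (r : seq I) (P : pred I) F :
  (forall i, P i -> dv e (F i)) -> dv e (\sum_(i <- r | P i) F i).
Proof.
move=> H; elim/big_rec: _ => [|i x Pi dx]; first exact: dv0.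
by apply: dvD => //; apply: H.
Qed.
Lemma dv_map (nu : {rmorphism algC -> algC}) e x : dv e x -> dv (nu e) (nu x).
Proof. by case=> w wA ->; exists (nu w); rewrite ?rmorphM ?Aint_aut. Qed.

Lemma dv_geom x k : x \in Aint -> dv (1 - x) (1 - x ^+ k).
Proof.
move=> xA; exists (\sum_(i < k) x ^+ i).
  by apply: rpred_sum => i _; apply: rpredX.
by rewrite -opprB subrX1 -mulNr opprB.
Qed.

Lemma dv_prod I (r : seq I) (P : pred I) (E F : I -> algC) :
  (forall i, P i -> dv (E i) (F i)) ->
  dv (\prod_(i <- r | P i) E i) (\prod_(i <- r | P i) F i).
Proof.
move=> H; elim/big_rec2: _ => [|i x y Pi dxy]; first by exists 1; rewrite ?mulr1 ?rpred1.
case: (H i Pi) => w wA ->; case: dxy => v vA ->.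
by exists (w * v); rewrite ?rpredM // mulrACA.
Qed.

Lemma dv_prod_nat (a b : nat) (E F : nat -> algC) :
  (forall i, (a <= i < b)%N -> dv (E i) (F i)) ->
  dv (\prod_(a <= i < b) E i) (\prod_(a <= i < b) F i).
Proof.
move=> H; rewrite big_seq_cond [X in dv _ X]big_seq_cond.
by apply: dv_prod => i /andP[]; rewrite mem_index_iota => /H.
Qed.

Lemma horner_intA (Q : {poly int}) x : x \in Aint -> (map_poly intr Q).[x] \in Aint.
Proof.
move=> xA; elim/poly_ind: Q => [|q c IH]; first by rewrite rmorph0 horner0 rpred0.
rewrite rmorphD rmorphM /= map_polyX map_polyC hornerMXaddC.
by rewrite rpredD ?rpredM ?rpred_int.
Qed.

Lemma dv_horner0 (Q : {poly int}) x : x \in Aint ->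
  dv x ((map_poly intr Q).[x] - (Q`_0)%:~R).
Proof.
move=> xA; elim/poly_ind: Q => [|q c IH]; first by rewrite rmorph0 horner0 coef0 subr0; apply: dv0.
rewrite rmorphD rmorphM /= map_polyX map_polyC hornerMXaddC coefD coefMX coefC /=.
rewrite add0r addrK mulrC; apply: dvr; exact: horner_intA.
Qed.

Section Cyc.
Variables (f : nat) (z : algC).
Hypotheses (hf : prime f) (hz : f.-primitive_root z).

Local Notation lam := (1 - z).
Local Notation n := f.-1.

Lemma zA : z \in Aint. Proof. exact: Aint_prim_root hz. Qed.
Lemma lamA : lam \in Aint. Proof. by rewrite rpredB ?rpred1 ?zA. Qed.

Lemma prod_lam : f%:R = \prod_(1 <= k < f) (1 - z ^+ k).
Proof.
have f0 : (0 < f)%N by apply: prime_gt0.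
have H := factor_Xn_sub_1 hz.
rewrite subrX1 big_ltn // expr0 in H.
have H2 : \prod_(1 <= i < f) ('X - (z ^+ i)%:P) = \sum_(i < f) 'X^i :> {poly algC}.
  apply: (mulfI (x := 'X - 1%:P)); last by rewrite H.
  by rewrite -size_poly_eq0 size_XsubC.
have := congr1 (horner^~ 1) H2; rewrite /= horner_prod horner_sum => H3.
rewrite (eq_bigr (fun i => ('X - (z ^+ i)%:P).[1])); last first.
  by move=> i _; rewrite hornerXsubC.
rewrite H3 (eq_bigr (fun=> 1)) => [|i _]; last by rewrite hornerXn expr1n.
by rewrite sumr_const card_ord.
Qed.

Lemma dv_lam_f : dv (lam ^+ n) f%:R.
Proof.
rewrite prod_lam -subn1 -(prodr_const_nat 1 f lam).
by apply: dv_prod_nat => k _; apply: dv_geom; apply: zA.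
Qed.

Lemma dv_lam_int (q : int) : dv lam q%:~R -> (f%:Z %| q)%Z.
Proof.
move=> hq.
have f1 : (1 < f)%N by apply: prime_gt1.
have H : dv f%:R (q%:~R ^+ n).
  rewrite prod_lam -subn1 -(prodr_const_nat 1 f).
  apply: dv_prod_nat => k /andP[k1 kf].
  have cop : coprime k f.
    rewrite coprime_sym prime_coprime //; apply/negP => /(dvdn_leq k1).
    by rewrite leqNgt kf.
  have [tau Htau] := Qn_aut_exists cop.
  have := dv_map tau hq; rewrite rmorphB rmorph1 (Htau z (prim_expr_order hz)).  
  by rewrite rmorph_int.
case: H => w wA Hw.
have wQ : w \in Crat.
  have -> : w = (q ^+ n)%:~R / f%:R.
    rewrite rmorphXn /= Hw [_ * w]mulrC mulfK // pnatr_eq0 -lt0n prime_gt0 //.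
  by rewrite rpred_div ?rpred_int ?rpred_nat.
have /intrP[m Dm] := Cint_rat_Aint wQ wA.
have : (q ^+ n) = f%:Z * m.
  apply: (@intr_inj algC); rewrite rmorphXn Hw Dm rmorphM /=.
  by rewrite pmulrn.
move=> Hqm.
have : (f%:Z %| q ^+ n)%Z by rewrite Hqm dvdz_mulr.
rewrite !dvdzE abszX /= Euclid_dvdX //; by case/andP.
Qed.

Lemma lam_neq0 : lam != 0.
Proof.
rewrite subr_eq0; apply/negP => /eqP z1.
have := prim_order_dvd hz 1; rewrite expr1 -z1 eqxx dvdn1 => /eqP f1.
by move: hf; rewrite f1.
Qed.

Lemma coef_dv_lam (Q : {poly int}) :
  (size Q <= n)%N -> dv (lam ^+ n) (map_poly intr Q).[lam] ->
  forall i, (f%:Z %| Q`_i)%Z.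
Proof.
move=> hs hd.
have hX : (map_poly intr Q).[lam] = \sum_(k < n) (Q`_k)%:~R * lam ^+ k.
  rewrite (@horner_coef_wide _ n); last by rewrite size_map_inj_poly //; apply: intr_inj.
  by apply: eq_bigr => k _; rewrite coef_map.
elim/ltn_ind => i IH.
have [iltn|] := ltnP i n; last first.
  by move=> /(leq_trans hs) /(nth_default 0) ->; rewrite dvdz0.
apply: dv_lam_int.
have hY : dv (lam ^+ n) (lam ^+ (n.-1 - i) * (map_poly intr Q).[lam]).
  by rewrite mulrC; apply: dvM => //; rewrite rpredX ?lamA.
rewrite hX mulr_sumr (bigD1 (Ordinal iltn)) //= in hY.
have hR : dv (lam ^+ n) (\sum_(k < n | k != Ordinal iltn)
           lam ^+ (n.-1 - i) * ((Q`_k)%:~R * lam ^+ k)).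
  apply: dv_sum => k /= kne.
  have [kli|kgi] := ltnP k i.
    have /dvdzP[c ->] := IH k kli.
    apply: (dv_trans dv_lam_f).
    have -> : lam ^+ (n.-1 - i) * ((c * f%:Z)%:~R * lam ^+ k) =
       f%:R * (c%:~R * lam ^+ (n.-1 - i) * lam ^+ k).
      rewrite intrM -pmulrn; ring.
    by apply: dvr; rewrite !rpredM ?rpredX ?lamA ?rpred_int.
  have kgi' : (i < k)%N.
    by rewrite ltn_neqAle kgi andbT; apply: contra kne => /eqP ki; apply/eqP/val_inj.
  rewrite mulrCA -exprD; apply: dvMl; last by rewrite rpred_int.
  have -> : (n.-1 - i + k = n + (k - i.+1))%N.
    have := ltn_ord k; lia.
  by rewrite exprD; apply: dvr; rewrite rpredX ?lamA.
have := dvB hY hR; rewrite addrK => H0.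
have : dv (lam ^+ n) ((Q`_i)%:~R * lam ^+ n.-1).
  suff -> : (Q`_i)%:~R * lam ^+ n.-1 = lam ^+ (n.-1 - i) * ((Q`_i)%:~R * lam ^+ i) by [].
  rewrite mulrCA -exprD; congr (_ * lam ^+ _); lia.
case=> w wA; have -> : n = n.-1.+1 by rewrite prednK // -subn1 subn_gt0 prime_gt1.
have nz : lam ^+ n.-1 != 0 by apply: expf_neq0; exact: lam_neq0.
move=> E; exists w => //; apply: (mulIf nz); rewrite E exprS; ring.
Qed.

Lemma dv_lam_fR : dv lam f%:R.
Proof.
apply: dv_trans dv_lam_f; exists (lam ^+ n.-1); first by rewrite rpredX ?lamA.
by rewrite -exprS prednK // -subn1 subn_gt0 prime_gt1.
Qed.

Lemma cong_step (Q : {poly int}) (a : int) (y : algC) :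
  ~~ (f%:Z %| a)%Z -> a%:~R * y = (map_poly intr Q).[lam] ->
  exists c : int, dv lam (a%:~R * (y - c%:~R)).
Proof.
move=> na Hy.
have cop : coprimez a f.
  rewrite coprimezE coprime_sym prime_coprime //; by rewrite dvdzE in na.
have [[u v] /= Huv] := coprimezP _ _ cop.
exists (u * Q`_0).
have -> : a%:~R * (y - (u * Q`_0)%:~R) =
   ((map_poly intr Q).[lam] - (Q`_0)%:~R) + f%:R * ((v * Q`_0)%:~R) :> algC.
  have E : (a * (u * Q`_0) = Q`_0 - f%:Z * (v * Q`_0))%R.
    rewrite -[X in _ = X - _](mul1r (Q`_0)) -Huv; ring.
  rewrite mulrBr -Hy -intrM E intrB intrM -pmulrn; ring.
apply: dvD; first by apply: dv_horner0; exact: lamA.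
by apply: dvM; [exact: dv_lam_fR | rewrite rpred_int].
Qed.

Lemma cong_int_poly (y : algC) : y \in Aint ->
  forall k (a : int) (Q : {poly int}), (`|a| <= k)%N -> a != 0 -> (size Q <= n)%N ->
  a%:~R * y = (map_poly intr Q).[lam] ->
  exists a0 : int, ~~ (f%:Z %| a0)%Z /\ exists c : int, dv lam (a0%:~R * (y - c%:~R)).
Proof.
move=> yA; elim=> [|k IH] a Q ha a0 sQ Hy.
  by move: a0; rewrite -normr_eq0 -[`|a|]abszE; move: ha; rewrite leqn0 => /eqP ->.
have [fa|nfa] := boolP (f%:Z %| a)%Z; last first.
  by exists a; split => //; apply: cong_step Hy.
case/dvdzP: fa => a' Da.
have f0 : f%:R != 0 :> algC by rewrite pnatr_eq0 -lt0n prime_gt0.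
have hd : dv (lam ^+ n) (map_poly intr Q).[lam].
  apply: (dv_trans (dv_lam_f)); rewrite -Hy Da intrM -pmulrn.
  exists (a'%:~R * y); first by rewrite rpredM ?rpred_int.
  ring.
have hc := coef_dv_lam sQ hd.
pose Q' := \poly_(i < size Q) (Q`_i %/ f%:Z)%Z.
have DQ : Q = f%:Z *: Q'.
  apply/polyP => i; rewrite coefZ coef_poly.
  case: ltnP => hi; first by rewrite mulrC divzK.
  by rewrite mulr0 nth_default.
apply: (IH a' Q').
- have f1 := prime_gt1 hf.
  have a'0 : a' != 0 by apply/eqP => a'0; move/eqP: a0; apply; rewrite Da a'0 mul0r.
  move: ha; rewrite Da abszM /=.
  have : (0 < `|a'|)%N by rewrite absz_gt0.
  move=> h1 h2; nia.
- by apply/eqP => a'0; move/eqP: a0; apply; rewrite Da a'0 mul0r.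
- by apply: leq_trans sQ; apply: size_poly.
- apply: (mulfI f0).
  have -> : f%:R * (a'%:~R * y) = a%:~R * y :> algC by rewrite Da intrM -pmulrn; ring.
  by rewrite Hy {1}DQ map_polyZ hornerZ /= pmulrn.
Qed.

Lemma cong_int (p : {poly rat}) (y : algC) : y \in Aint -> y = (map_poly ratr p).[z] ->
  exists a0 : int, ~~ (f%:Z %| a0)%Z /\ exists c : int, dv lam (a0%:~R * (y - c%:~R)).
Proof.
move=> yA Dy.
pose g := \poly_(i < f) (1 : rat).
have sg : size g = f by apply: size_poly_eq; apply: oner_neq0.
have g0 : g != 0 by rewrite -size_poly_eq0 sg -lt0n prime_gt0.
have gz : (map_poly ratr g).[z] = 0.
  rewrite (@horner_coef_wide _ f); last by rewrite size_map_poly sg.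
  rewrite (eq_bigr (fun i : 'I_f => z ^+ i)) => [|i _]; last first.
    by rewrite coef_map coef_poly ltn_ord /= rmorph1 mul1r.
  have z1 : z - 1 != 0 by rewrite -opprB oppr_eq0 lam_neq0.
  apply: (mulfI z1); rewrite mulr0 -subrX1 prim_expr_order // subrr //.
pose p1 := p %% g.
pose P := p1 \Po (1 - 'X).
have s2 : size (1 - 'X : {poly rat}) = 2.
  by rewrite -opprB size_opp -polyCN size_XaddC.
have sP : (size P <= n)%N.
  rewrite size_comp_poly2 // -ltnS prednK ?prime_gt0 // -sg ltn_modp //.
have DyP : y = (map_poly ratr P).[lam].
  rewrite map_comp_poly horner_comp rmorphB rmorph1 /= map_polyX !hornerE.
  rewrite opprB addrC subrK.
  by rewrite Dy {1}(divp_eq p g) rmorphD rmorphM hornerD hornerM gz mulr0 add0r.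
have [Q [a a0 DP]] := rat_poly_scale P.
apply: (@cong_int_poly y yA `|a| a Q) => //.
- by apply: leq_trans sP; rewrite DP size_scale ?invr_eq0 ?intr_eq0 // size_rat_int_poly.
- rewrite DyP DP map_polyZ hornerZ /= (fmorphV ratr) rmorph_int mulVKf ?intr_eq0 //.
  rewrite -map_poly_comp; congr (horner _ _); apply: eq_map_poly => x /=.
  by rewrite ratr_int.
Qed.

Definition cong x y := exists2 s : int, ~~ (f%:Z %| s)%Z & dv lam (s%:~R * (x - y)).

Lemma notdvM (s1 s2 : int) : ~~ (f%:Z %| s1)%Z -> ~~ (f%:Z %| s2)%Z -> ~~ (f%:Z %| s1 * s2)%Z.
Proof. by rewrite !dvdzE abszM /= Euclid_dvdM // => /negbTE-> /negbTE->. Qed.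

Lemma congM x1 y1 x2 y2 : x2 \in Aint -> y1 \in Aint ->
  cong x1 y1 -> cong x2 y2 -> cong (x1 * x2) (y1 * y2).
Proof.
move=> x2A y1A [s1 n1 d1] [s2 n2 d2]; exists (s1 * s2); first exact: notdvM.
have -> : (s1 * s2)%:~R * (x1 * x2 - y1 * y2) =
   (s1%:~R * (x1 - y1)) * (s2%:~R * x2) + (s2%:~R * (x2 - y2)) * (s1%:~R * y1) :> algC.
  rewrite intrM; ring.
by apply: dvD; apply: dvM => //; rewrite rpredM ?rpred_int.
Qed.

Lemma cong_prod I (r : seq I) (P : pred I) (X Y : I -> algC) :
  (forall i, P i -> [/\ X i \in Aint, Y i \in Aint & cong (X i) (Y i)]) ->
  cong (\prod_(i <- r | P i) X i) (\prod_(i <- r | P i) Y i).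
Proof.
move=> H.
suff : [/\ \prod_(i <- r | P i) X i \in Aint, \prod_(i <- r | P i) Y i \in Aint &
   cong (\prod_(i <- r | P i) X i) (\prod_(i <- r | P i) Y i)] by case.
apply: (big_ind2 (fun a b => [/\ a \in Aint, b \in Aint & cong a b])) => //.
- split; rewrite ?rpred1 //; exists 1; first by rewrite dvdzE /= dvdn1; apply/eqP => f1; move: hf; rewrite f1.
  by rewrite subrr mulr0; apply: dv0.
- move=> x1 x2 y1 y2 [a1 a2 c1] [b1 b2 c2]; split; rewrite ?rpredM //.
  exact: congM.
Qed.

Lemma dv_lam_aut (nu : {rmorphism algC -> algC}) x : dv lam x -> dv lam (nu x).
Proof.
move=> /(dv_map nu); rewrite rmorphB rmorph1.
have : nu z ^+ f = 1 by rewrite -rmorphXn prim_expr_order // rmorph1.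
case/(prim_rootP hz) => i ->; apply: dv_trans; apply: dv_geom; exact: zA.
Qed.

Lemma cong_aut (nu : {rmorphism algC -> algC}) x (c : int) : cong x c%:~R -> cong (nu x) c%:~R.
Proof.
case=> s ns d; exists s => //; have := dv_lam_aut nu d.
by rewrite rmorphM rmorphB !rmorph_int.
Qed.

Lemma cong_int_dvd (a b : int) : cong a%:~R b%:~R -> (f%:Z %| a - b)%Z.
Proof.
case=> s ns; rewrite -intrB -intrM => /dv_lam_int.
rewrite !dvdzE abszM /= Euclid_dvdM //; by rewrite dvdzE in ns; case/orP => // /(negP ns).
Qed.
End Cyc.

Section LSide.
Variables (L : splittingFieldType rat) (iota : {rmorphism L -> algC}).

Lemma intA x : integral x -> iota x \in Aint.
Proof.
case=> p [mp rp]; apply: (@root_monic_Aint (map_poly intr p)).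
- move: rp; rewrite /root -(fmorph_eq0 iota) -horner_map -map_poly_comp.
  by rewrite (eq_map_poly (rmorph_int iota)).
- by rewrite monicE lead_coef_map_inj ?(monicP mp) ?rmorph1 //; apply: intr_inj.
- by apply/polyOverP => i; rewrite coef_map rpred_int.
Qed.

Lemma Aint_integral x : iota x \in Aint -> integral x.
Proof.
move=> xA; have /floorpP[pz Dp] : minCpoly (iota x) \is a polyOver Num.int by [].
exists pz; split.
  have := minCpoly_monic (iota x); rewrite Dp !monicE lead_coef_map_inj //.
    by rewrite -(inj_eq (@intr_inj algC)) rmorph1.
  exact: intr_inj.
rewrite /root -(fmorph_eq0 iota) -horner_map -map_poly_comp.
rewrite (eq_map_poly (rmorph_int iota)) -Dp; exact: root_minCpoly.
Qed.

Lemma normK_iota (hgal : galois 1 {:L}) x :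
  ratr (normK x) = \prod_(s in ('Gal({:L} / 1))%g) iota (s x).
Proof.
have hN : galNorm 1 fullv x \in (1%VS : {vspace L}) by apply: mem_galNorm => //; apply: memvf.
have : galNorm 1 fullv x \in <<[tuple (1%R : L)]>>%VS by rewrite span_seq1.
move/coord_span; rewrite big_ord1 /= -/(normK x) => E.
rewrite -rmorph_prod -/(galNorm 1 fullv x) E rmorphZ_num rmorph1 mulr1.
by [].
Qed.
End LSide.

Lemma gal_ext (L : splittingFieldType rat) (iota : {rmorphism L -> algC})
  (s : gal_of (fullv : {vspace L})) :
  exists nu : {rmorphism algC -> algC}, forall x, iota (s x) = nu (iota x).
Proof. by have [nu Hnu] := extend_algC_subfield_aut iota s; exists nu. Qed.

Lemma normK_int (L : splittingFieldType rat) (iota : {rmorphism L -> algC})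
  (hgal : galois 1 {:L}) x : iota x \in Aint -> exists t : int, normK x = t%:~R.
Proof.
move=> xA.
have hA : ratr (normK x) \in Aint.
  rewrite (normK_iota iota) //; apply: rpred_prod => s _.
  by have [nu ->] := gal_ext iota s; rewrite Aint_aut.
have := Cint_rat_Aint (Crat_rat _) hA; rewrite Cint_rat => /intrP[t ->].
by exists t.
Qed.

Unset Implicit Arguments.
Set Strict Implicit.
Set Printing Implicit Defensive.

Theorem mainTheorem9 (L : splittingFieldType rat) (l f : nat)
  (hl : prime l) (hlodd : odd l) (hdim : \dim {:L} = l)
  (hgal : galois 1 {:L}) (hcyc : cyclic 'Gal({:L} / 1))
  (hf : prime f) (hcond : is_conductor L f)
  (alpha beta : L) (ha0 : alpha != 0) (hb0 : beta != 0)
  (ha : integral alpha) (hb : integral beta) (hNb : normK beta = f%:R)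
  (m : int) (hm : is_min_res f alpha m) :
  mK_ge (alpha / beta) (m%:~R / f%:R).
Proof.
move=> g gI.
case: hcond => _ [[iota [z [hz Hrep]]] _].
pose y := alpha - beta * g.
have Ly : alpha / beta - g = y / beta by rewrite /y; field.
have aA := intA iota ha; have bA := intA iota hb; have gA := intA iota gI.
have yA : iota y \in Aint by rewrite /y rmorphB rmorphM /= rpredB ?rpredM.
have [t Dt] := normK_int hgal yA.
have [ta Dta] := normK_int hgal aA.
have [p Dp] := Hrep beta.
have [a0 [na0 [c dc]]] := cong_int hf hz bA Dp.
have hcB : cong f z (iota beta) c%:~R by exists a0.
have hprod : cong f z (\prod_(s in ('Gal({:L} / 1))%g) iota (s beta))
                      (\prod_(s in ('Gal({:L} / 1))%g) c%:~R).
  apply: (cong_prod hf) => s _; have [nu Hnu] := gal_ext iota s.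
  by rewrite Hnu Aint_aut rpred_int; split => //; apply: (cong_aut hz).
rewrite -(normK_iota iota) // hNb prodr_const -rmorphXn ratr_nat in hprod.
have fc : (f%:Z %| c)%Z.
  have H := cong_int_dvd hf hz (a := f%:Z) (b := c ^+ #|('Gal({:L} / 1))%g|) hprod.
  have H2 : (f%:Z %| c ^+ #|('Gal({:L} / 1))%g|)%Z.
    have -> : c ^+ #|('Gal({:L} / 1))%g| = f%:Z - (f%:Z - c ^+ #|('Gal({:L} / 1))%g|).
      by rewrite opprB addrC subrK.
    by apply: rpredB => //; apply: dvdzz.
  by move: H2; rewrite !dvdzE abszX Euclid_dvdX // => /andP[].
have hB0 : cong f z (iota beta) 0%:~R.
  exists a0 => //; case/dvdzP: fc => c' Dc.
  have -> : a0%:~R * (iota beta - 0%:~R) =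
      a0%:~R * (iota beta - c%:~R) + f%:R * (a0%:~R * c'%:~R) :> algC.
    rewrite Dc intrM -pmulrn; ring.
  by apply: dvD => //; apply: dvM; [exact: dv_lam_fR | rewrite rpredM ?rpred_int].
have hprod2 : cong f z (\prod_(s in ('Gal({:L} / 1))%g) iota (s y))
                       (\prod_(s in ('Gal({:L} / 1))%g) iota (s alpha)).
  apply: (cong_prod hf) => s _; have [nu Hnu] := gal_ext iota s.
  rewrite !Hnu !Aint_aut; split => //.
  have [s0 ns0 d0] := cong_aut hz nu hB0.
  exists s0 => //.
  have -> : s0%:~R * (nu (iota y) - nu (iota alpha)) =
     - ((s0%:~R * (nu (iota beta) - 0%:~R)) * nu (iota g)) :> algC.
    rewrite /y !rmorphB !rmorphM /=; ring.
  by apply: dvN; apply: dvM => //; rewrite Aint_aut.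
rewrite -!(normK_iota iota) // Dt Dta !ratr_int in hprod2.
have tc := cong_int_dvd hf hz hprod2.
have Nq : normK (alpha / beta - g) = t%:~R / f%:R.
  rewrite Ly.
  suff E : (ratr (normK (y / beta)) : algC) = ratr (t%:~R / f%:R) by apply: (fmorph_inj _ E).
  rewrite (normK_iota iota hgal).
  rewrite (eq_bigr (fun s : gal_of (fullv : {vspace L}) => iota (s y) / iota (s beta))) => [|s _]; last first.
    by rewrite rmorphM fmorphV /= rmorphM fmorphV.
  rewrite prodf_div -!(normK_iota iota hgal) Dt hNb.
  by rewrite rmorphM fmorphV /= ratr_int ratr_nat.
have mt : m <= `|t|.
  apply: hm.2.
    by exists y; split; [exact: Aint_integral yA | exact: Dt].
  exists ((t - ta) %/ f%:Z)%Z.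
  by rewrite divzK // Dta intrB.
rewrite Nq normrM normfV normr_nat -intr_norm.
rewrite ler_pM2r ?invr_gt0 ?ltr0n ?prime_gt0 // ler_int //.
Qed.
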